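(* Let $M$ be a smooth $n$-manifold with a torsion-free linear connection $\nabla$ and a symmetric $(0,2)$-tensor field $c$, and let $\overline\nabla$ be the Levi-Civita connection of the modified Riemannian extension $\overline g_{\nabla,c}$ on $T^{\ast}M$. Then the Schouten–Van Kampen connection $\overline\nabla^{\ast}$ associated to $\overline\nabla$ and adapted to the pair of distributions $(\mathcal H,\mathcal V)$ coincides with the horizontal lift ${}^H\nabla$ of $\nabla$ to $T^{\ast}M$.
   Context: Summation convention; $\overline{i}=n+i$. $\Gamma^h_{ij}$ are the coefficients of $\nabla$ in local coordinates $(x^i)$. On $T^{\ast}M$ use induced coordinates $(x^i,p_i)$, $\partial_{\overline i}=\partial/\partial p_i$, and the adapted frame $E_j=\partial_j+p_a\Gamma^a_{hj}\partial_{\overline h}$, $E_{\overline j}=\partial_{\overline j}$. The horizontal distribution $\mathcal H$ is spanned by the $E_j$ and the vertical distribution $\mathcal V$ by the $E_{\overline j}$; $H$ and $V$ denote the projections of $TT^{\ast}M=\mathcal H\oplus\mathcal V$ onto $\mathcal H$ and $\mathcal V$. The modified Riemannian extension is $\overline{g}_{\nabla,c}(E_i,E_j)=c_{ij}$, $\overline{g}_{\nabla,c}(E_i,E_{\overline j})=\overline{g}_{\nabla,c}(E_{\overline j},E_i)=\delta_i^j$, $\overline{g}_{\nabla,c}(E_{\overline i},E_{\overline j})=0$. The Schouten–Van Kampen connection is $\overline\nabla^{\ast}_XY=H(\overline\nabla_X HY)+V(\overline\nabla_X VY)$. The horizontal lift ${}^H\nabla$ is the linear connection on $T^{\ast}M$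 with ${}^H\nabla_{E_{\overline{i}}}E_{\overline{j}}=0$, ${}^H\nabla_{E_{\overline{i}}}E_{j}=0$, ${}^H\nabla_{E_{i}}E_{\overline{j}}=-\Gamma^{j}_{ih}E_{\overline{h}}$, ${}^H\nabla_{E_{i}}E_{j}=\Gamma^{h}_{ij}E_{h}$. *)

(* Defs.v *)
From HB Require Import structures.
From mathcomp Require Import all_boot all_order all_algebra.
From mathcomp Require Import all_classical all_reals all_analysis.
Set Implicit Arguments. Unset Strict Implicit. Unset Printing Implicit Defensive.
Import Order.TTheory GRing.Theory Num.Theory.
Import numFieldNormedType.Exports.
Local Open Scope classical_set_scope.
Local Open Scope ring_scope.

Section CotangentChart.
Variables (R : realType) (n : nat).

(* A point of the chart T*U of T*M has coordinates (x^1..x^n, p_1..p_n),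
   stored as a row vector z of size n+n: z_i = x^i, z_(n+i) = p_i. *)
Definition pt := 'rV[R]_(n + n).
Definition hor (i : 'I_n) : 'I_(n + n) := lshift n i.
Definition ver (i : 'I_n) : 'I_(n + n) := rshift n i.
Definition xpart (z : pt) : 'rV[R]_n := \row_i z ord0 (hor i).
Definition ppart (z : pt) : 'rV[R]_n := \row_i z ord0 (ver i).

Definition iterD {m : nat} (vs : seq 'rV[R]_m) (f : 'rV[R]_m -> R) : 'rV[R]_m -> R :=
  foldr (fun v g => fun z => 'D_v g z) f vs.
Definition smooth_on {m : nat} (W : set 'rV[R]_m) (f : 'rV[R]_m -> R) : Prop :=
  forall (vs : seq 'rV[R]_m) (z : 'rV[R]_m), W z -> differentiable (iterD vs f) z.

Definition cvec (A : 'I_(n + n)) : pt := delta_mx 0 A.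
Definition pd (A : 'I_(n + n)) (f : pt -> R) (z : pt) : R := 'D_(cvec A) f z.

(* A vector field on the chart: its components in the coordinate frame d_A. *)
Definition vfield := pt -> pt.

(* Data of the base: Christoffel symbols Gam h i j = Gamma^h_{ij}, and c i j = c_{ij}. *)
Variables (Gam : 'I_n -> 'I_n -> 'I_n -> 'rV[R]_n -> R) (c : 'I_n -> 'I_n -> 'rV[R]_n -> R).

(* Adapted frame: E_j = d_j + p_a Gamma^a_{hj} d_{n+h},  E_{n+j} = d_{n+j}.
   Row A of Fm z is the coordinate expression of E_A at z. *)
Definition Eframe (A : 'I_(n + n)) (z : pt) : pt :=
  match fintype.split A with
  | inl j => cvec (hor j) +
             \sum_(h < n) (\sum_(a < n) ppart z ord0 a * Gam a h j (xpart z)) *: cvec (ver h)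
  | inr j => cvec (ver j)
  end.
Definition Fm (z : pt) : 'M[R]_(n + n) := \matrix_(A, B) Eframe A z ord0 B.

(* Components of a vector u at z with respect to the adapted frame: u = sum_A fco z u A E_A. *)
Definition fco (z : pt) (u : pt) : pt := u *m invmx (Fm z).

Definition Hproj (z : pt) (u : pt) : pt :=
  \sum_(j < n) fco z u ord0 (hor j) *: Eframe (hor j) z.
Definition Vproj (z : pt) (u : pt) : pt :=
  \sum_(j < n) fco z u ord0 (ver j) *: Eframe (ver j) z.

(* Modified Riemannian extension, given by its values on the adapted frame:
   g(E_i,E_j) = c_ij, g(E_i,E_{n+j}) = g(E_{n+j},E_i) = delta_ij, g(E_{n+i},E_{n+j}) = 0. *)
Definition Gframe (z : pt) : 'M[R]_(n + n) :=
  \matrix_(A, B)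
    match fintype.split A, fintype.split B with
    | inl i, inl j => c i j (xpart z)
    | inl i, inr j => (i == j)%:R
    | inr i, inl j => (i == j)%:R
    | inr i, inr j => 0
    end.
Definition gmat (z : pt) : 'M[R]_(n + n) :=
  invmx (Fm z) *m Gframe z *m (invmx (Fm z))^T.

Definition LCGam (z : pt) (C A B : 'I_(n + n)) : R :=
  2^-1 * \sum_(D < n + n) invmx (gmat z) C D *
    (pd A (fun w => gmat w B D) z + pd B (fun w => gmat w A D) z
     - pd D (fun w => gmat w A B) z).

Definition LC (X Y : vfield) : vfield := fun z =>
  'D_(X z) Y z + \row_C (\sum_(A < n + n) \sum_(B < n + n) LCGam z C A B * X z ord0 A * Y z ord0 B).

Definition SVK (X Y : vfield) : vfield := fun z =>
  Hproj z (LC X (fun w => Hproj w (Y w)) z) + Vproj z (LC X (fun w => Vproj w (Y w)) z).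

Definition HLframe (A B : 'I_(n + n)) (z : pt) : pt :=
  match fintype.split A, fintype.split B with
  | inl i, inl j => \sum_(h < n) Gam h i j (xpart z) *: Eframe (hor h) z
  | inl i, inr j => - \sum_(h < n) Gam j i h (xpart z) *: Eframe (ver h) z
  | inr _, _ => 0
  end.
Definition HL (X Y : vfield) : vfield := fun z =>
  \sum_(B < n + n) 'D_(X z) (fun w => fco w (Y w) ord0 B) z *: Eframe B z
  + \sum_(A < n + n) \sum_(B < n + n)
      (fco z (X z) ord0 A * fco z (Y z) ord0 B) *: HLframe A B z.

End CotangentChart.

(* Main.v *)
Require Import Defs.
From HB Require Import structures.
From mathcomp Require Import all_boot all_order all_algebra.
From mathcomp Require Import all_classical all_reals all_analysis.
From mathcomp Require Import ring.
Set Implicit Arguments. Unset Strict Implicit. Unset Printing Implicit Defensive.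
Import Order.TTheory GRing.Theory Num.Theory.
Import numFieldNormedType.Exports.
Local Open Scope classical_set_scope.
Local Open Scope ring_scope.

Lemma split_hor n (i : 'I_n) : fintype.split (hor i) = inl i.
Proof. exact: (unsplitK (inl i)). Qed.
Lemma split_ver n (i : 'I_n) : fintype.split (ver i) = inr i.
Proof. exact: (unsplitK (inr i)). Qed.

Lemma derive_aff (R : realType) (V W : normedModType R) (f : V -> W) z v d :
  (forall h : R, f (h *: v + z) = f z + h *: d) -> derivable f z v /\ 'D_v f z = d.
Proof.
move=> H.
have E : (fun h : R => h^-1 *: ((f \o shift z) (h *: v) - f z)) @ 0^' --> d.
  apply: cvg_trans (cvg_cst d).
  apply: near_eq_cvg; near=> h.
  have h0 : h != 0 by near: h; exact: nbhs_dnbhs_neq.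
  by rewrite /= H addrC addKr scalerA mulVf ?scale1r.
  exact: Proper_dnbhs_numFieldType.
split; first exact: (cvgP d E).
exact: cvg_lim E.
Unshelve. all: by end_near. Qed.

Lemma ordHV n (P : 'I_(n+n) -> Prop) :
  (forall i, P (hor i)) -> (forall i, P (ver i)) -> forall A, P A.
Proof. move=> Hh Hv A; rewrite -(splitK A); case: (fintype.split A) => i; [exact: Hh|exact: Hv]. Qed.

Lemma eqHH n (i j : 'I_n) : (hor i == hor j) = (i == j). Proof. exact: eq_lshift. Qed.
Lemma eqVV n (i j : 'I_n) : (ver i == ver j) = (i == j). Proof. exact: eq_rshift. Qed.
Lemma eqHV n (i j : 'I_n) : (hor i == ver j) = false. Proof. exact: eq_lrshift. Qed.
Lemma eqVH n (i j : 'I_n) : (ver i == hor j) = false. Proof. exact: eq_rlshift. Qed.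

Definition Nm (R : realType) n (Gam : 'I_n -> 'I_n -> 'I_n -> 'rV[R]_n -> R) (w : pt R n) : 'M[R]_n :=
  \matrix_(j, h) \sum_(a < n) ppart w ord0 a * Gam a h j (xpart w).
Definition Cm (R : realType) n (c : 'I_n -> 'I_n -> 'rV[R]_n -> R) (w : pt R n) : 'M[R]_n :=
  \matrix_(i, j) c i j (xpart w).

Lemma bHH (R : realType) n (a b c d : 'M[R]_n) i j : block_mx a b c d (hor i) (hor j) = a i j.
Proof. exact: block_mxEul. Qed.
Lemma bHV (R : realType) n (a b c d : 'M[R]_n) i j : block_mx a b c d (hor i) (ver j) = b i j.
Proof. exact: block_mxEur. Qed.
Lemma bVH (R : realType) n (a b c d : 'M[R]_n) i j : block_mx a b c d (ver i) (hor j) = c i j.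
Proof. exact: block_mxEdl. Qed.
Lemma bVV (R : realType) n (a b c d : 'M[R]_n) i j : block_mx a b c d (ver i) (ver j) = d i j.
Proof. exact: block_mxEdr. Qed.

Lemma cvecE (R : realType) n A B : @cvec R n A ord0 B = (A == B)%:R.
Proof. by rewrite /cvec mxE /= eq_sym. Qed.

Lemma Fm_block (R : realType) n Gam (w : pt R n) :
  Fm Gam w = block_mx 1%:M (Nm Gam w) 0 1%:M.
Proof.
apply/matrixP => A B; rewrite mxE; move: A B.
apply: ordHV => i; apply: ordHV => j;
  rewrite /Eframe ?split_hor ?split_ver ?bHH ?bHV ?bVH ?bVV.
all: rewrite ?(cvecE, mxE, summxE) ?eqHH ?eqHV ?eqVH ?eqVV ?eqxx //.
- rewrite big1 ?addr0 // => h _; by rewrite mxE cvecE eqVH mulr0.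
- rewrite /= add0r (bigD1 j) //= mxE cvecE eqxx mulr1 [X in _ + X]big1 ?addr0 // => h /negbTE hj.
  by rewrite mxE cvecE eqVV hj mulr0.
Qed.

Definition Finv (R : realType) n Gam (w : pt R n) : 'M[R]_(n + n) :=
  block_mx 1%:M (- Nm Gam w) 0 1%:M.

Lemma invFm (R : realType) n Gam (w : pt R n) : invmx (Fm Gam w) = Finv Gam w.
Proof.
have H : Fm Gam w *m Finv Gam w = 1%:M.
  rewrite Fm_block /Finv mulmx_block !mul1mx !mulmx1 !mul0mx !mulmx0.
  rewrite addNr !add0r (addrC 1%:M) add0r. by rewrite -scalar_mx_block.
have [Fu _] := mulmx1_unit H.
by rewrite -(mulKmx Fu (Finv Gam w)) H mulmx1.
Qed.

Lemma Gframe_block (R : realType) n (c : 'I_n -> 'I_n -> 'rV[R]_n -> R) (w : pt R n) :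
  Gframe c w = block_mx (Cm c w) 1%:M 1%:M 0.
Proof.
apply/matrixP => A B; rewrite mxE; move: A B.
by apply: ordHV => i; apply: ordHV => j;
  rewrite ?split_hor ?split_ver ?bHH ?bHV ?bVH ?bVV ?mxE.
Qed.

Definition Sm (R : realType) n Gam c (w : pt R n) : 'M[R]_n :=
  Cm c w - Nm Gam w - (Nm Gam w)^T.

Lemma gmat_block (R : realType) n Gam c (w : pt R n) :
  gmat Gam c w = block_mx (Sm Gam c w) 1%:M 1%:M 0.
Proof.
rewrite /gmat invFm Gframe_block /Finv tr_block_mx !trmx1 trmx0 linearN /=.
rewrite !mulmx_block !mul1mx !mulmx1 !mul0mx !mulmx0. rewrite !GRing.addr0 !add0r. by rewrite mul1mx mul0mx GRing.addr0.

Qed.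

Lemma ginv (R : realType) n Gam c (w : pt R n) :
  invmx (gmat Gam c w) = block_mx 0 1%:M 1%:M (- Sm Gam c w).
Proof.
have H : gmat Gam c w *m block_mx 0 1%:M 1%:M (- Sm Gam c w) = 1%:M.
  rewrite gmat_block mulmx_block !mul1mx !mulmx1 !mul0mx !mulmx0 !GRing.addr0 !add0r subrr -scalar_mx_block //.

have [Fu _] := mulmx1_unit H.
by rewrite -(mulKmx Fu (block_mx _ _ _ _)) H mulmx1.
Qed.

Lemma sum_dl (R : realType) n (F : 'I_n -> R) k : \sum_(j < n) F j * (j == k)%:R = F k.
Proof.
rewrite (bigD1 k) //= eqxx mulr1 big1 ?GRing.addr0 // => j /negbTE ->; exact: mulr0.
Qed.
Lemma sum_dr (R : realType) n (F : 'I_n -> R) k : \sum_(j < n) F j * (k == j)%:R = F k.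
Proof. by under eq_bigr do rewrite eq_sym; exact: sum_dl. Qed.

Lemma scalE (R : realType) m k (a : R) (M : 'M[R]_(m, k)) i j : (a *: M) i j = a * M i j.
Proof. by rewrite mxE. Qed.

Lemma zeroE (R : realType) m k i j : (0 : 'M[R]_(m, k)) i j = 0.
Proof. by rewrite mxE. Qed.
Lemma oneE (R : realType) m (i j : 'I_m) : (1%:M : 'M[R]_m) i j = (i == j)%:R.
Proof. by rewrite mxE. Qed.

Lemma sum_dl2 (R : realType) n (F : 'I_n -> R) k : \sum_(j < n) (k == j)%:R * F j = F k.
Proof. by under eq_bigr do rewrite mulrC; exact: sum_dr. Qed.

Lemma Eent (R : realType) n Gam A B (w : pt R n) : Eframe Gam A w ord0 B = Fm Gam w A B.
Proof. by rewrite mxE. Qed.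

Lemma fcoH (R : realType) n Gam (w u : pt R n) j :
  fco Gam w u ord0 (hor j) = u ord0 (hor j).
Proof.
rewrite /fco invFm mxE big_split_ord /=.
under eq_bigr do rewrite /Finv bHH mxE.
under [X in _ + X]eq_bigr do rewrite /Finv bVH mxE mulr0.
by rewrite sum_dl big1 ?GRing.addr0.
Qed.

Lemma fcoV (R : realType) n Gam (w u : pt R n) h :
  fco Gam w u ord0 (ver h) = u ord0 (ver h) - \sum_(j < n) u ord0 (hor j) * Nm Gam w j h.
Proof.
rewrite /fco invFm mxE big_split_ord /= addrC.
under eq_bigr do rewrite /Finv bVV mxE.
under [X in _ + X]eq_bigr do rewrite /Finv bHV mxE mulrN.
by rewrite sum_dl sumrN.
Qed.

Lemma HprojH (R : realType) n Gam (w u : pt R n) k :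
  Hproj Gam w u ord0 (hor k) = u ord0 (hor k).
Proof.
rewrite /Hproj summxE.
under eq_bigr do rewrite fcoH scalE Eent Fm_block bHH oneE.
by rewrite sum_dl.
Qed.

Lemma HprojV (R : realType) n Gam (w u : pt R n) h :
  Hproj Gam w u ord0 (ver h) = \sum_(j < n) u ord0 (hor j) * Nm Gam w j h.
Proof.
rewrite /Hproj summxE.
by under eq_bigr do rewrite scalE Eent Fm_block bHV fcoH.
Qed.

Lemma VprojH (R : realType) n Gam (w u : pt R n) k :
  Vproj Gam w u ord0 (hor k) = 0.
Proof.
rewrite /Vproj summxE big1 // => j _.
by rewrite scalE Eent Fm_block bVH zeroE mulr0.
Qed.

Lemma VprojV (R : realType) n Gam (w u : pt R n) h :
  Vproj Gam w u ord0 (ver h) = fco Gam w u ord0 (ver h).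
Proof.
rewrite /Vproj summxE.
under eq_bigr do rewrite scalE Eent Fm_block bVV oneE.
by rewrite sum_dl.
Qed.

Lemma gHH (R : realType) n Gam c (w : pt R n) i j :
  gmat Gam c w (hor i) (hor j) = c i j (xpart w) - Nm Gam w i j - Nm Gam w j i.
Proof. by rewrite gmat_block bHH /Sm !mxE. Qed.
Lemma gHV (R : realType) n Gam c (w : pt R n) i j :
  gmat Gam c w (hor i) (ver j) = (i == j)%:R.
Proof. by rewrite gmat_block bHV oneE. Qed.
Lemma gVH (R : realType) n Gam c (w : pt R n) i j :
  gmat Gam c w (ver i) (hor j) = (i == j)%:R.
Proof. by rewrite gmat_block bVH oneE. Qed.
Lemma gVV (R : realType) n Gam c (w : pt R n) i j :
  gmat Gam c w (ver i) (ver j) = 0.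
Proof. by rewrite gmat_block bVV zeroE. Qed.

Lemma giHH (R : realType) n Gam c (w : pt R n) i j :
  invmx (gmat Gam c w) (hor i) (hor j) = 0.
Proof. by rewrite ginv bHH zeroE. Qed.
Lemma giHV (R : realType) n Gam c (w : pt R n) i j :
  invmx (gmat Gam c w) (hor i) (ver j) = (i == j)%:R.
Proof. by rewrite ginv bHV oneE. Qed.
Lemma giVH (R : realType) n Gam c (w : pt R n) i j :
  invmx (gmat Gam c w) (ver i) (hor j) = (i == j)%:R.
Proof. by rewrite ginv bVH oneE. Qed.

Lemma pdC1 (R : realType) n Gam c (z : pt R n) A i D :
  pd A (fun w => gmat Gam c w (ver i) D) z = 0.
Proof.
have -> : (fun w => gmat Gam c w (ver i) D) = cst (gmat Gam c z (ver i) D).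
  apply/funext => w; move: D; apply: ordHV => j; by rewrite /= ?gVH ?gVV.
exact: derive_cst.
Qed.
Lemma pdC2 (R : realType) n Gam c (z : pt R n) A i D :
  pd A (fun w => gmat Gam c w D (ver i)) z = 0.
Proof.
have -> : (fun w => gmat Gam c w D (ver i)) = cst (gmat Gam c z D (ver i)).
  apply/funext => w; move: D; apply: ordHV => j; by rewrite /= ?gHV ?gVV.
exact: derive_cst.
Qed.

Lemma shiftE (R : realType) n (z : pt R n) A B (h : R) :
  (h *: cvec R A + z) ord0 B = h * (A == B)%:R + z ord0 B.
Proof. by rewrite mxE scalE cvecE. Qed.

Lemma xpart_shiftV (R : realType) n (z : pt R n) k (h : R) :
  xpart (h *: cvec R (ver k) + z) = xpart z.
Proof. by apply/rowP => a; rewrite [LHS]mxE shiftE eqVH mulr0 add0r mxE. Qed.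
Lemma Nm_shiftV (R : realType) n Gam (z : pt R n) k (h : R) j l :
  Nm Gam (h *: cvec R (ver k) + z) j l = Nm Gam z j l + h * Gam k l j (xpart z).
Proof.
rewrite !mxE xpart_shiftV.
under eq_bigr do rewrite mxE shiftE eqVV mulrDl.
rewrite big_split /= addrC; congr (_ + _).
  by apply: eq_bigr => a _; rewrite mxE.
rewrite (bigD1 k) //= eqxx mulr1 big1 ?GRing.addr0 // => a; rewrite eq_sym => /negbTE ->; by rewrite mulr0 mul0r.
Qed.
Lemma pdV (R : realType) n Gam c (z : pt R n) k i j :
  pd (ver k) (fun w => gmat Gam c w (hor i) (hor j)) z =
  - (Gam k j i (xpart z) + Gam k i j (xpart z)).
Proof.
apply: (proj2 (derive_aff _)) => h.
rewrite !gHH !Nm_shiftV xpart_shiftV.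
rewrite -[h *: _]/(h * _).
ring.
Qed.

Lemma sumHV (R : realType) n (F : 'I_(n+n) -> R) :
  \sum_(A < n + n) F A = \sum_(i < n) F (hor i) + \sum_(i < n) F (ver i).
Proof. exact: big_split_ord. Qed.

Lemma LCH (R : realType) n Gam c (z : pt R n) k A B :
  LCGam Gam c z (hor k) A B = - (2^-1 * pd (ver k) (fun w => gmat Gam c w A B) z).
Proof.
rewrite /LCGam sumHV [X in X + _]big1; last first.
  by move=> d _; rewrite (giHH Gam c z k d) mul0r.
rewrite add0r.
under eq_bigr => d _ do rewrite (giHV Gam c z k d) (pdC2 Gam c z A d B) (pdC2 Gam c z B d A) add0r sub0r.
by rewrite (sum_dl2 (fun d => - pd (ver d) (fun w => gmat Gam c w A B) z)) mulrN.
Qed.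

Lemma LCV (R : realType) n Gam c (z : pt R n) h A j :
  LCGam Gam c z (ver h) A (ver j) = 2^-1 * pd (ver j) (fun w => gmat Gam c w A (hor h)) z.
Proof.
rewrite /LCGam sumHV.
have E1 : forall d, pd A (fun w => gmat Gam c w (ver j) (hor d)) z = 0.
  by move=> d; apply: pdC1.
have E2 : forall d, pd (hor d) (fun w => gmat Gam c w A (ver j)) z = 0.
  by move=> d; apply: pdC2.
have E3 : forall d, pd (ver d) (fun w => gmat Gam c w A (ver j)) z = 0.
  by move=> d; apply: pdC2.
have E4 : forall d, pd (ver j) (fun w => gmat Gam c w A (ver d)) z = 0.
  by move=> d; apply: pdC2.
have E5 : forall d, pd A (fun w => gmat Gam c w (ver j) (ver d)) z = 0.
  by move=> d; apply: pdC1.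
rewrite [X in _ + X]big1 ?GRing.addr0; last by move=> d _; rewrite E4 E5 E3 subr0 add0r mulr0.
under eq_bigr => d _ do rewrite E1 E2 add0r subr0 (giVH Gam c z h d).
by rewrite (sum_dl2 (fun d => pd (ver j) (fun w => gmat Gam c w A (hor d)) z)).
Qed.

Lemma dsum (R : realType) n m (F : 'I_m -> pt R n -> R) z v :
  (forall a, derivable (F a) z v) -> derivable (fun w => \sum_(a < m) F a w) z v.
Proof. by move=> H; rewrite -fct_sumE; exact: derivable_sum. Qed.

Lemma dmul (R : realType) n (f g : pt R n -> R) z v :
  derivable f z v -> derivable g z v -> derivable (fun w => f w * g w) z v.
Proof. by move=> df dg; exact: (derivableM df dg). Qed.

Lemma dsub (R : realType) n (f g : pt R n -> R) z v :
  derivable f z v -> derivable g z v -> derivable (fun w => f w - g w) z v.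
Proof. by move=> df dg; exact: (derivableB df dg). Qed.

Lemma dcoord (R : realType) n (z v : pt R n) A :
  derivable (fun w : pt R n => w ord0 A) z v.
Proof.
apply: (proj1 (derive_aff (d := v ord0 A) _)) => h.
by rewrite !mxE addrC.
Qed.

Lemma xpart_lin (R : realType) n (z v : pt R n) (h : R) :
  xpart (h *: v + z) = h *: xpart v + xpart z.
Proof. by apply/rowP => a; rewrite !mxE. Qed.

Lemma dcomp_xpart (R : realType) n (g : 'rV[R]_n -> R) (z v : pt R n) :
  differentiable g (xpart z) -> derivable (fun w => g (xpart w)) z v.
Proof.
move=> dg; have := @diff_derivable _ _ _ g (xpart z) (xpart v) dg.
rewrite /derivable.
suff -> : (fun h : R => h^-1 *: (((fun w => g (xpart w)) \o shift z) (h *: v) - g (xpart z))) =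
          (fun h : R => h^-1 *: ((g \o shift (xpart z)) (h *: xpart v) - g (xpart z))) by [].
by apply/funext => h /=; rewrite xpart_lin.
Qed.

Lemma addE (R : realType) m k (a b : 'M[R]_(m, k)) i j : (a + b) i j = a i j + b i j.
Proof. by rewrite mxE. Qed.
Lemma oppE (R : realType) m k (a : 'M[R]_(m, k)) i j : (- a) i j = - a i j.
Proof. by rewrite mxE. Qed.

Lemma HLf_V (R : realType) n Gam (z : pt R n) i B : HLframe Gam (ver i) B z = 0.
Proof. by rewrite /HLframe split_ver. Qed.

Lemma HLf_HH_H (R : realType) n Gam (z : pt R n) i j k :
  HLframe Gam (hor i) (hor j) z ord0 (hor k) = Gam k i j (xpart z).
Proof.
rewrite /HLframe !split_hor summxE.
under eq_bigr do rewrite scalE Eent Fm_block bHH oneE.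
exact: (sum_dl (fun l => Gam l i j (xpart z))).
Qed.

Lemma HLf_HH_V (R : realType) n Gam (z : pt R n) i j h :
  HLframe Gam (hor i) (hor j) z ord0 (ver h) = \sum_(l < n) Gam l i j (xpart z) * Nm Gam z l h.
Proof.
rewrite /HLframe !split_hor summxE.
by under eq_bigr do rewrite scalE Eent Fm_block bHV.
Qed.

Lemma HLf_HV_H (R : realType) n Gam (z : pt R n) i j k :
  HLframe Gam (hor i) (ver j) z ord0 (hor k) = 0.
Proof.
rewrite /HLframe split_hor split_ver oppE summxE big1 ?oppr0 // => l _.
by rewrite scalE Eent Fm_block bVH zeroE mulr0.
Qed.

Lemma HLf_HV_V (R : realType) n Gam (z : pt R n) i j h :
  HLframe Gam (hor i) (ver j) z ord0 (ver h) = - Gam j i h (xpart z).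
Proof.
rewrite /HLframe split_hor split_ver oppE summxE.
under eq_bigr do rewrite scalE Eent Fm_block bVV oneE.
by rewrite (sum_dl (fun l => Gam j i l (xpart z))).
Qed.

Lemma LCH_HH (R : realType) n Gam c (z : pt R n) k i j :
  Gam k i j (xpart z) = Gam k j i (xpart z) ->
  LCGam Gam c z (hor k) (hor i) (hor j) = Gam k i j (xpart z).
Proof.
move=> tf; rewrite LCH pdV tf.
have h2 : (2 : R) != 0 by rewrite pnatr_eq0.
by field.
Qed.

Lemma LCH_V1 (R : realType) n Gam c (z : pt R n) k i B :
  LCGam Gam c z (hor k) (ver i) B = 0.
Proof.
rewrite LCH.
have -> : pd (ver k) (fun w => gmat Gam c w (ver i) B) z = 0 by apply: pdC1.
by rewrite mulr0 oppr0.
Qed.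

Lemma LCH_V2 (R : realType) n Gam c (z : pt R n) k A j :
  LCGam Gam c z (hor k) A (ver j) = 0.
Proof.
rewrite LCH.
have -> : pd (ver k) (fun w => gmat Gam c w A (ver j)) z = 0 by apply: pdC2.
by rewrite mulr0 oppr0.
Qed.

Lemma LCV_H (R : realType) n Gam c (z : pt R n) h i j :
  Gam j h i (xpart z) = Gam j i h (xpart z) ->
  LCGam Gam c z (ver h) (hor i) (ver j) = - Gam j i h (xpart z).
Proof.
move=> tf; rewrite LCV pdV tf.
have h2 : (2 : R) != 0 by rewrite pnatr_eq0.
by field.
Qed.

Lemma LCV_V (R : realType) n Gam c (z : pt R n) h i j :
  LCGam Gam c z (ver h) (ver i) (ver j) = 0.
Proof.
rewrite LCV.
have -> : pd (ver j) (fun w => gmat Gam c w (ver i) (hor h)) z = 0 by apply: pdC1.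
by rewrite mulr0.
Qed.

Lemma dNm (R : realType) n Gam (z v : pt R n) :
  (forall a h j, differentiable (Gam a h j) (xpart z)) ->
  forall j h, derivable (fun w => Nm Gam w j h) z v.
Proof.
move=> dG j h.
have -> : (fun w => Nm Gam w j h) =
    (fun w => \sum_(a < n) w ord0 (ver a) * Gam a h j (xpart w)).
  by apply/funext => w; rewrite mxE; apply: eq_bigr => a _; rewrite mxE.
apply: dsum => a; apply: dmul; first exact: dcoord.
exact: dcomp_xpart.
Qed.

Lemma dHY (R : realType) n Gam (Y : vfield R n) (z v : pt R n) :
  (forall a h j, differentiable (Gam a h j) (xpart z)) ->
  (forall B, derivable (fun w => Y w ord0 B) z v) ->
  derivable (fun w => Hproj Gam w (Y w)) z v.
Proof.
move=> dG dY; apply/derivable_mxP => i C; rewrite (ord1 i); move: C; apply: ordHV => k.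
- have -> : (fun x => Hproj Gam x (Y x) 0 (hor k)) = (fun x => Y x ord0 (hor k)).
    by apply/funext => x; rewrite HprojH.
  exact: dY.
- have -> : (fun x => Hproj Gam x (Y x) 0 (ver k)) =
      (fun x => \sum_(j < n) Y x ord0 (hor j) * Nm Gam x j k).
    by apply/funext => x; rewrite HprojV.
  apply: dsum => j; apply: dmul; first exact: dY.
  exact: dNm.
Qed.

Lemma dVY (R : realType) n Gam (Y : vfield R n) (z v : pt R n) :
  (forall a h j, differentiable (Gam a h j) (xpart z)) ->
  (forall B, derivable (fun w => Y w ord0 B) z v) ->
  derivable (fun w => Vproj Gam w (Y w)) z v.
Proof.
move=> dG dY; apply/derivable_mxP => i C; rewrite (ord1 i); move: C; apply: ordHV => k.
- have -> : (fun x => Vproj Gam x (Y x) 0 (hor k)) = cst 0.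
    by apply/funext => x; rewrite VprojH.
  exact: derivable_cst.
- have -> : (fun x => Vproj Gam x (Y x) 0 (ver k)) =
      (fun x => Y x ord0 (ver k) - \sum_(j < n) Y x ord0 (hor j) * Nm Gam x j k).
    by apply/funext => x; rewrite VprojV fcoV.
  apply: dsub; first exact: dY.
  apply: dsum => j; apply: dmul; first exact: dY.
  exact: dNm.
Qed.

Lemma Dent (R : realType) n (F : pt R n -> pt R n) z v C :
  derivable F z v -> 'D_v F z ord0 C = 'D_v (fun w => F w ord0 C) z.
Proof. by move=> dF; rewrite derive_mx // mxE. Qed.

Lemma LCent (R : realType) n Gam c (X F : vfield R n) z C :
  LC Gam c X F z ord0 C = 'D_(X z) F z ord0 C +
    \sum_(A < n + n) \sum_(B < n + n) LCGam Gam c z C A B * X z ord0 A * F z ord0 B.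
Proof. by rewrite /LC addE mxE. Qed.

Lemma alg_final (R : comRingType) n (D : 'I_n -> R) (Dv : R) (G : 'I_n -> 'I_n -> 'I_n -> R)
  (K : 'I_n -> 'I_n -> R) (x y f N : 'I_n -> R) :
  \sum_(j < n) (D j + \sum_(i < n) \sum_(l < n) G j i l * x i * y l) * N j +
  (Dv + \sum_(i < n) \sum_(b < n) - K b i * x i * f b)
  = \sum_(j < n) D j * N j + Dv +
    \sum_(i < n) (\sum_(j < n) (x i * y j) * (\sum_(l < n) G l i j * N l) +
                  \sum_(j < n) (x i * f j) * - K j i).
Proof.
have E1 : \sum_(j < n) (D j + \sum_(i < n) \sum_(l < n) G j i l * x i * y l) * N j =
   \sum_(j < n) D j * N j + \sum_(i < n) \sum_(j < n) (x i * y j) * (\sum_(l < n) G l i j * N l).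
  have -> : \sum_(i < n) \sum_(j < n) (x i * y j) * (\sum_(l < n) G l i j * N l) =
      \sum_(j < n) \sum_(i < n) \sum_(l < n) G j i l * x i * y l * N j.
    have -> : \sum_(i < n) \sum_(j < n) (x i * y j) * (\sum_(l < n) G l i j * N l) =
        \sum_(i < n) \sum_(a < n) \sum_(j < n) G a i j * x i * y j * N a.
      apply: eq_bigr => i _; under eq_bigr do rewrite mulr_sumr.
      rewrite exchange_big /=; apply: eq_bigr => a _; apply: eq_bigr => j _; ring.
    by rewrite exchange_big.
  rewrite -big_split /=; apply: eq_bigr => j _.
  by rewrite mulrDl mulr_suml; congr (_ + _); apply: eq_bigr => i _; rewrite mulr_suml.
have E2 : \sum_(i < n) \sum_(b < n) - K b i * x i * f b =
    \sum_(i < n) \sum_(j < n) (x i * f j) * - K j i.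
  by apply: eq_bigr => i _; apply: eq_bigr => j _; ring.
rewrite E1 E2 big_split /=; ring.
Qed.

Unset Implicit Arguments. Set Strict Implicit. Set Printing Implicit Defensive.

Theorem proposition5 (R : realType) (n : nat)
  (U : set 'rV[R]_n) (U_open : open U)
  (Gam : 'I_n -> 'I_n -> 'I_n -> 'rV[R]_n -> R)
  (c : 'I_n -> 'I_n -> 'rV[R]_n -> R)
  (Gam_smooth : forall h i j, smooth_on U (Gam h i j))
  (torsion_free : forall h i j x, U x -> Gam h i j x = Gam h j i x)
  (c_smooth : forall i j, smooth_on U (c i j))
  (c_sym : forall i j x, U x -> c i j x = c j i x)
  (X Y : vfield R n)
  (X_smooth : forall A, smooth_on (@xpart R n @^-1` U) (fun z => X z ord0 A))
  (Y_smooth : forall A, smooth_on (@xpart R n @^-1` U) (fun z => Y z ord0 A))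
  (z : pt R n) (hz : U (xpart z)) :
  SVK Gam c X Y z = HL Gam X Y z.
Proof.
have hz' : (@xpart R n @^-1` U) z := hz.
have dG : forall a h j, differentiable (Gam a h j) (xpart z).
  by move=> a h j; exact: (Gam_smooth a h j [::] (xpart z) hz).
have dY : forall B, derivable (fun w => Y w ord0 B) z (X z).
  by move=> B; apply: diff_derivable; exact: (Y_smooth B [::] z hz').
have tf := fun h i j => torsion_free h i j (xpart z) hz.
have dH := dHY dG dY.
have dV := dVY dG dY.
have fH : forall j, (fun w => fco Gam w (Y w) ord0 (hor j)) = (fun w => Y w ord0 (hor j)).
  by move=> j; apply/funext => w; rewrite fcoH.
have Uh : forall k, LC Gam c X (fun w => Hproj Gam w (Y w)) z ord0 (hor k) =
    'D_(X z) (fun w => Y w ord0 (hor k)) z +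
    \sum_(i < n) \sum_(j < n) Gam k i j (xpart z) * X z ord0 (hor i) * Y z ord0 (hor j).
  move=> k; rewrite LCent (Dent _ dH).
  have -> : (fun w => Hproj Gam w (Y w) ord0 (hor k)) = (fun w => Y w ord0 (hor k)).
    by apply/funext => w; rewrite HprojH.
  rewrite sumHV [X in _ + (_ + X)]big1 ?GRing.addr0; last first.
    by move=> i _; apply: big1 => B _; rewrite LCH_V1 !mul0r.
  congr (_ + _); apply: eq_bigr => i _.
  rewrite sumHV [X in _ + X]big1 ?GRing.addr0; last first.
    by move=> j _; rewrite LCH_V2 !mul0r.
  by apply: eq_bigr => j _; rewrite LCH_HH // HprojH.
have Vh : forall k, LC Gam c X (fun w => Vproj Gam w (Y w)) z ord0 (hor k) = 0.
  move=> k; rewrite LCent (Dent _ dV).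
  have -> : (fun w => Vproj Gam w (Y w) ord0 (hor k)) = cst 0.
    by apply/funext => w; rewrite VprojH.
  rewrite derive_cst add0r; apply: big1 => A _.
  rewrite sumHV big1 ?add0r; first by apply: big1 => b _; rewrite LCH_V2 !mul0r.
  by move=> b _; rewrite VprojH mulr0.
have Vv : forall h, LC Gam c X (fun w => Vproj Gam w (Y w)) z ord0 (ver h) =
    'D_(X z) (fun w => fco Gam w (Y w) ord0 (ver h)) z +
    \sum_(i < n) \sum_(b < n) - Gam b i h (xpart z) * X z ord0 (hor i) * fco Gam z (Y z) ord0 (ver b).
  move=> h; rewrite LCent (Dent _ dV).
  have -> : (fun w => Vproj Gam w (Y w) ord0 (ver h)) = (fun w => fco Gam w (Y w) ord0 (ver h)).
    by apply/funext => w; rewrite VprojV.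
  congr (_ + _); rewrite sumHV [X in _ + X]big1 ?GRing.addr0; last first.
    move=> i _; rewrite sumHV big1 ?add0r; first by apply: big1 => b _; rewrite LCV_V !mul0r.
    by move=> b _; rewrite VprojH mulr0.
  apply: eq_bigr => i _; rewrite sumHV big1 ?add0r; last by move=> b _; rewrite VprojH mulr0.
  by apply: eq_bigr => b _; rewrite LCV_H // VprojV.
apply/rowP => C; move: C; apply: ordHV => [k|h].
- rewrite /SVK addE HprojH VprojH GRing.addr0 Uh.
  rewrite /HL addE summxE sumHV.
  under [X in _ = X + _ + _]eq_bigr do rewrite scalE Eent Fm_block bHH oneE.
  rewrite (sum_dl (fun j => 'D_(X z) (fun w => fco Gam w (Y w) ord0 (hor j)) z)) fH.
  rewrite [X in _ + X + _]big1 ?GRing.addr0; last first.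
    by move=> j _; rewrite scalE Eent Fm_block bVH zeroE mulr0.
  rewrite summxE sumHV [X in _ + (_ + X)]big1 ?GRing.addr0; last first.
    by move=> i _; rewrite summxE big1 // => B _; rewrite scalE HLf_V zeroE mulr0.
  congr (_ + _); apply: eq_bigr => i _.
  rewrite summxE sumHV [X in _ + X]big1 ?GRing.addr0; last first.
    by move=> j _; rewrite scalE HLf_HV_H mulr0.
  apply: eq_bigr => j _; rewrite scalE HLf_HH_H !fcoH.
  by rewrite [RHS]mulrC mulrA.
- rewrite /SVK addE HprojV VprojV fcoV.
  under eq_bigr do rewrite Uh.
  under [X in _ + (_ - X)]eq_bigr do rewrite Vh mul0r.
  rewrite big1_eq subr0 Vv.
  rewrite /HL addE summxE sumHV.
  under [X in _ = X + _ + _]eq_bigr do rewrite scalE Eent Fm_block bHV.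
  under [X in _ = _ + X + _]eq_bigr do rewrite scalE Eent Fm_block bVV oneE.
  rewrite (sum_dl (fun j => 'D_(X z) (fun w => fco Gam w (Y w) ord0 (ver j)) z)).
  under [X in _ = X + _ + _]eq_bigr => j _ do rewrite fH.
  rewrite [X in _ = _ + X]summxE sumHV [X in _ = _ + (_ + X)]big1 ?GRing.addr0; last first.
    by move=> i _; rewrite summxE big1 // => B _; rewrite scalE HLf_V zeroE mulr0.
  have Ei : forall i, (\sum_(B < n + n) (fco Gam z (X z) ord0 (hor i) * fco Gam z (Y z) ord0 B) *:
         HLframe Gam (hor i) B z) 0 (ver h) =
      \sum_(j < n) (X z ord0 (hor i) * Y z ord0 (hor j)) *
          (\sum_(l < n) Gam l i j (xpart z) * Nm Gam z l h) +
      \sum_(j < n) (X z ord0 (hor i) * fco Gam z (Y z) ord0 (ver j)) * - Gam j i h (xpart z).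
    move=> i; rewrite summxE sumHV; congr (_ + _); apply: eq_bigr => j _.
      by rewrite scalE HLf_HH_V !fcoH.
    by rewrite scalE HLf_HV_V fcoH.
  under [X in _ = _ + X]eq_bigr => i _ do rewrite Ei.
  exact: (@alg_final _ n (fun j => 'D_(X z) (fun w => Y w ord0 (hor j)) z) _
    (fun a i j => Gam a i j (xpart z)) (fun b i => Gam b i h (xpart z))
    (fun i => X z ord0 (hor i)) (fun j => Y z ord0 (hor j))
    (fun b => fco Gam z (Y z) ord0 (ver b)) (fun l => Nm Gam z l h)).
Qed.
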